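(* Let $n\ge 2$. For $\alpha=(a_1,\dots,a_{n-1})\in PF_{n-1}$ define $\Psi(\alpha)=(n+1-a_1,\,n+1-a_2,\,\dots,\,n+1-a_{n-1},\,n)$. Then $\Psi$ is a bijection from $PF_{n-1}$ onto $PF_{n,n-1}\setminus PF_{n,n-2}$.
   Context: For $n\in\mathbb{N}$ let $[n]=\{1,\dots,n\}$ and $PP_n=[n]^n$. For an integer $k\ge 0$, the $k$-Naples parking rule: there are $n$ spots numbered $1,\dots,n$ west to east, initially empty; cars $c_1,\dots,c_n$ arrive in order, car $c_i$ preferring spot $a_i$. If spot $a_i$ is empty, $c_i$ parks there. Otherwise $c_i$ checks spots $a_i-1,\dots,a_i-k$ in this order (skipping those $<1$) and parks in the first empty one; if all are occupied, it drives east and parks in the first empty spot numbered greater than $a_i$, failing to park if none exists. $PF_{n,k}$ is the set of preferences in $PP_n$ for which all cars park. $PF_{m}=PF_{m,0}$ is the set of classical parking functions of length $m$. *)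

(* Defs.v *)
From mathcomp Require Import all_boot.
Set Implicit Arguments. Unset Strict Implicit. Unset Printing Implicit Defensive.

(* A preference list of length n is a seq nat of size n with entries in [1,n];
   entry i (0-based) is the preferred spot of car c_(i+1). Spots are 1..n. *)
Definition PP (n : nat) (a : seq nat) : bool :=
  (size a == n) && all (fun x => (1 <= x) && (x <= n)) a.

Definition occupied (occ : seq nat) (j : nat) : bool := j \in occ.

Fixpoint first_empty (occ : seq nat) (cands : seq nat) : option nat :=
  match cands with
  | [::] => None
  | c :: cs => if occupied occ c then first_empty occ cs else Some c
  end.

(* Spot chosen by a car with preference a, under the k-Naples rule, with
   n spots and set of occupied spots occ.  Candidates in order:
   a, then a-1, ..., a-k (skipping those < 1), then a+1, ..., n. *)
Definition naples_spot (n k : nat) (occ : seq nat) (a : nat) : option nat :=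
  first_empty occ
    ([:: a] ++ [seq a - i | i <- iota 1 k & i < a]
            ++ iota a.+1 (n - a)).

Fixpoint naples_park (n k : nat) (occ : seq nat) (prefs : seq nat)
  : option (seq nat) :=
  match prefs with
  | [::] => Some occ
  | a :: ps =>
      match naples_spot n k occ a with
      | None => None
      | Some s => naples_park n k (s :: occ) ps
      end
  end.

Definition PF_naples (n k : nat) (a : seq nat) : bool :=
  PP n a && (naples_park n k [::] a != None).

Definition PF (m : nat) (a : seq nat) : bool := PF_naples m 0 a.

Definition Psi (n : nat) (alpha : seq nat) : seq nat :=
  rcons [seq n.+1 - x | x <- alpha] n.

(* Main.v *)
Require Import Defs.
From mathcomp Require Import all_boot.
From mathcomp Require Import zify.
Set Implicit Arguments. Unset Strict Implicit. Unset Printing Implicit Defensive.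

Definition cands (n k a : nat) : seq nat :=
  [:: a] ++ [seq a - i | i <- iota 1 k & i < a] ++ iota a.+1 (n - a).

Definition inr (n : nat) := fun j => (1 <= j) && (j <= n).

Lemma spotE n k occ a : naples_spot n k occ a = first_empty occ (cands n k a).
Proof. by []. Qed.

Lemma fe_cat occ c1 c2 : first_empty occ (c1 ++ c2) =
  if first_empty occ c1 is Some s then Some s else first_empty occ c2.
Proof. elim: c1 => //= c cs IH; case: (occupied occ c) => //. Qed.

Lemma fe_some occ c s : first_empty occ c = Some s -> (s \in c) && (s \notin occ).
Proof.
elim: c => //= c cs IH. rewrite /occupied. case: ifP => Hc.
- by move/IH => /andP[H1 ->]; rewrite inE H1 orbT.
- by case=> <-; rewrite inE eqxx Hc.
Qed.

Lemma fe_none occ c : first_empty occ c = None -> forall j, j \in c -> j \in occ.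
Proof.
elim: c => //= c cs IH. rewrite /occupied. case: ifP => // Hc /IH H j.
rewrite inE => /orP[/eqP -> // | ]; exact: H.
Qed.

Lemma fe_all occ c : (forall j, j \in c -> j \in occ) -> first_empty occ c = None.
Proof.
elim: c => //= c cs IH H. rewrite /occupied H ?mem_head //.
apply: IH => j Hj; apply: H; by rewrite inE Hj orbT.
Qed.

Lemma fe_exists occ c j : j \in c -> j \notin occ -> first_empty occ c <> None.
Proof. move=> Hj Hn /fe_none H. by rewrite H in Hn. Qed.

Lemma mem_refl n occ x : x <= n -> all (fun y => y <= n) occ ->
  (n.+1 - x \in [seq n.+1 - y | y <- occ]) = (x \in occ).
Proof.
move=> Hx; elim: occ => //= y ys IH /andP[Hy Hys].
rewrite !inE IH //. congr orb. apply/eqP/eqP; lia.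
Qed.

Lemma fe_map n occ c : all (fun y => y <= n) occ -> all (fun y => y <= n) c ->
  first_empty [seq n.+1 - y | y <- occ] [seq n.+1 - y | y <- c] =
  omap (fun y => n.+1 - y) (first_empty occ c).
Proof.
move=> Ho; elim: c => //= c cs IH /andP[Hc Hcs].
rewrite /occupied mem_refl //. case: (c \in occ) => //. exact: IH.
Qed.

Lemma reflK n s : all (fun y => y <= n.+1) s ->
  [seq n.+1 - y | y <- [seq n.+1 - y | y <- s]] = s.
Proof. elim: s => //= y s IH /andP[Hy Hs]. rewrite IH //. congr cons; lia. Qed.

Lemma filter_small a k : a.-1 <= k -> [seq i <- iota 1 k | i < a] = iota 1 a.-1.
Proof.
move=> H. have E : k = a.-1 + (k - a.-1) by lia.
rewrite {1}E iotaD filter_cat.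
rewrite (eq_in_filter (a2 := pred0) (s := iota (1 + a.-1) _)); last first.
  move=> i; rewrite mem_iota /= => Hi; apply/negbTE; lia.
rewrite filter_pred0 cats0. apply/all_filterP/allP => i; rewrite mem_iota; lia.
Qed.

Lemma cands_gen n k a : 1 <= a -> a.-1 <= k ->
  cands n k a = [seq a - i | i <- iota 0 a] ++ iota a.+1 (n - a).
Proof.
move=> Ha Hk. rewrite /cands filter_small //.
by case: a Ha Hk => // a _ _ /=; rewrite subn0.
Qed.

Lemma cands_n n : 2 <= n -> cands n n.-2 n = [seq n - i | i <- iota 0 n.-1].
Proof.
case: n => [|[|m]] // _. rewrite /cands.
rewrite (_ : [seq i <- iota 1 m.+2.-2 | i < m.+2] = iota 1 m); last first.
  apply/all_filterP/allP => i; rewrite mem_iota; lia.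
by rewrite subnn /= subn0 cats0.
Qed.

Lemma cands_split n a : 2 <= a <= n ->
  cands n n.-2 a = [seq a - i | i <- iota 0 a.-1] ++
                   (if a < n then 1 :: iota a.+1 (n - a) else [::]).
Proof.
move=> Ha. case: ltnP => Han.
- rewrite cands_gen; [|lia|lia].
  have E : a = a.-1 + 1 by lia.
  have -> : iota 0 a = iota 0 a.-1 ++ [:: a.-1] by rewrite {1}E iotaD.
  rewrite map_cat -catA /=. congr (_ ++ _ :: _). lia.
- have -> : a = n by lia. rewrite cands_n; [by rewrite cats0 | lia].
Qed.

Lemma cands0 m x : cands m 0 x = iota x (m - x).+1.
Proof. by []. Qed.

Lemma E2 n a : 1 <= a <= n ->
  iota (n.+1 - a) a.-1 = [seq n.+1 - y | y <- [seq a - i | i <- iota 0 a.-1]].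
Proof.
move=> Ha. rewrite -map_comp -{1}(addn0 (n.+1 - a)) iotaDl. apply/eq_in_map => i.
rewrite mem_iota /= => Hi. lia.
Qed.

Lemma E1 n a : 1 <= a <= n ->
  [seq n.+1 - y | y <- iota (n.+1 - a) a.-1] = [seq a - i | i <- iota 0 a.-1].
Proof.
move=> Ha. rewrite E2 // reflK //. apply/allP => y /mapP[i _ ->]; lia.
Qed.

Lemma cands_range n k a j : 1 <= a <= n -> j \in cands n k a -> 1 <= j <= n.
Proof.
move=> Ha. rewrite /cands /= inE mem_cat mem_iota => /orP[/eqP->|/orP[|]]; try lia.
case/mapP => i; rewrite mem_filter => /andP[Hi _] ->; lia.
Qed.

Lemma mem_cands_gen n k a j : 1 <= a <= n -> a.-1 <= k -> 1 <= j <= n ->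
  j \in cands n k a.
Proof.
move=> Ha Hk Hj. rewrite cands_gen; [|lia|lia]. rewrite mem_cat mem_iota.
case: (leqP j a) => Hja; last lia.
apply/orP; left; apply/mapP; exists (a - j); [rewrite mem_iota; lia | lia].
Qed.

Lemma cov1 n a j : 1 <= a <= n -> 1 <= j <= n -> j \in cands n n.-1 a.
Proof. move=> Ha Hj; apply: mem_cands_gen => //; lia. Qed.

Lemma cov2 n a j : 2 <= n -> 1 <= a <= n -> 2 <= j <= n -> j \in cands n n.-2 a.
Proof.
move=> Hn Ha Hj. case: (ltnP a n) => Han.
- apply: mem_cands_gen; lia.
- have -> : a = n by lia. rewrite cands_n //.
  apply/mapP; exists (n - j); [rewrite mem_iota; lia | lia].
Qed.

Lemma park_cat n k occ s1 s2 : naples_park n k occ (s1 ++ s2) =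
  if naples_park n k occ s1 is Some o then naples_park n k o s2 else None.
Proof.
elim: s1 occ => //= a s IH occ. case: (naples_spot n k occ a) => [s'|] //=.
Qed.

Lemma park_inv n k occ ps fin : naples_park n k occ ps = Some fin ->
  uniq occ -> all (inr n) occ -> all (inr n) ps ->
  [/\ uniq fin, all (inr n) fin & size fin = size occ + size ps].
Proof.
elim: ps occ => [|a ps IH] occ /=; first by move=> [<-] *; rewrite addn0.
rewrite spotE. case E: first_empty => [s|] // Hp Hu Ho /andP[Ha Hps].
move: (fe_some E) => /andP[Hs Hso].
have Hsr := cands_range Ha Hs.
have [H1 H2 H3] := IH _ Hp (introT andP (conj Hso Hu)) (introT andP (conj Hsr Ho)) Hps.
split => //. rewrite H3 /=. lia.
Qed.

Lemma park_ok n k lo occ ps :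
  (forall a, 1 <= a <= n -> forall j, lo <= j <= n -> j \in cands n k a) ->
  (forall j, 1 <= j < lo -> j \in occ) -> uniq occ -> all (inr n) occ ->
  all (inr n) ps -> size occ + size ps <= n -> naples_park n k occ ps <> None.
Proof.
move=> Hcov; elim: ps occ => [|a ps IH] occ Hlo Hu Ho Hps Hsz //=.
move: Hps => /andP[Ha Hps]. rewrite /= in Hsz. change (seq nat) in occ.
have [j Hj Hjn] : exists2 j, lo <= j <= n & j \notin occ.
  case: (boolP (all (fun j => j \in occ) (iota 1 n))) => [/allP Hall | /allPn [j Hj Hjn]].
  - have := @uniq_leq_size _ (iota 1 n) occ (iota_uniq 1 n) Hall. rewrite size_iota => H; exfalso.
    have H0 : n <= size occ := H. lia.
  - exists j => //. rewrite mem_iota in Hj. case: (leqP lo j) => Hl; first lia.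
    have Hin : j \in occ by apply: Hlo; lia.
    by rewrite Hin in Hjn.
rewrite spotE. case E: first_empty => [s|].
- move: (fe_some E) => /andP[Hs Hso].
  have Hsr := cands_range Ha Hs.
  apply: IH => //=.
  + by move=> i Hi; rewrite inE Hlo ?orbT.
  + by rewrite Hso.
  + by apply/andP; split.
  + lia.
- move=> _; exact: (fe_exists (Hcov a Ha j Hj) Hjn E).
Qed.

Lemma fwd n alpha occ fin : 2 <= n ->
  all (inr n.-1) alpha -> all (fun y => y <= n) occ ->
  naples_park n.-1 0 occ alpha = Some fin ->
  naples_park n n.-2 [seq n.+1 - y | y <- occ] [seq n.+1 - y | y <- alpha] =
  Some [seq n.+1 - y | y <- fin].
Proof.
move=> Hn; elim: alpha occ => [|x al IH] occ /=; first by move=> _ _ [<-].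
case/andP=> Hx Hal Ho. rewrite spotE cands0.
case E: first_empty => [s|] // Hp.
have Ha : 2 <= n.+1 - x <= n by move: Hx; rewrite /inr; lia.
rewrite spotE (cands_split Ha) fe_cat.
have e1 : n.+1 - (n.+1 - x) = x by lia.
have e2 : (n.+1 - x).-1 = (n.-1 - x).+1 by move: Hx; rewrite /inr; lia.
have Ha1 : 1 <= n.+1 - x <= n by lia.
rewrite -(E1 Ha1) e1 e2 fe_map //; last first.
  apply/allP => y; rewrite mem_iota; move: Hx; rewrite /inr; lia.
rewrite E /=. apply: (IH (s :: occ) Hal _ Hp).
move: (fe_some E) => /andP[Hs _]. rewrite mem_iota in Hs. rewrite /= Ho andbT.
move: Hx; rewrite /inr; lia.
Qed.

Lemma bwd n ps occ : 2 <= n ->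
  uniq occ -> all (fun j => 2 <= j <= n) occ -> all (inr n) ps ->
  size occ + size ps = n ->
  naples_park n n.-2 occ ps = None ->
  exists2 ps', ps = rcons ps' n &
    all (fun a => 2 <= a <= n) ps' &&
    (naples_park n.-1 0 [seq n.+1 - y | y <- occ] [seq n.+1 - y | y <- ps'] != None).
Proof.
move=> Hn; elim: ps occ => [|a ps IH] occ Hu Ho Hps Hsz //=.
change (seq nat) in occ.
move: Hps => /andP [Ha Hps]. rewrite /inr in Ha.
have H1o : 1 \notin occ.
  apply/negP => H1; move/allP: Ho => /(_ 1 H1); lia.
have Hoinr : all (inr n) occ.
  apply/allP => y Hy; move/allP: Ho => /(_ y Hy); rewrite /inr; lia.
have Holen : all (fun y => y <= n) occ.
  apply/allP => y Hy; move/allP: Ho => /(_ y Hy); lia.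
rewrite spotE. case E: first_empty => [s|] Hp.
- move: (fe_some E) => /andP[Hs Hso].
  have Hsr := cands_range Ha Hs.
  have Hs2 : 2 <= s.
    case: (ltnP 1 s) => // Hs1. exfalso.
    apply: (@park_ok n n.-2 2 (s :: occ) ps _ _ _ _ Hps _ Hp).
    + move=> b Hb j Hj; exact: cov2.
    + move=> j Hj. have -> : j = 1 by lia. have -> : s = 1 by lia. exact: mem_head.
    + by rewrite /= Hso.
    + by rewrite /= Hoinr andbT /inr.
    + rewrite /= in Hsz *. lia.
  have Ha2 : 2 <= a.
    case: (ltnP 1 a) => // Ha1. exfalso.
    have a1 : a = 1 by lia.
    have : first_empty occ (cands n n.-2 1) = Some 1.
      by rewrite /cands cat1s /= /occupied (negbTE H1o).
    rewrite -a1 E => [[]]; lia.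
  have Hsz' : size (s :: occ) + size ps = n by rewrite /= in Hsz *; lia.
  have Ho' : all (fun j => 2 <= j <= n) (s :: occ).
    by rewrite /= Ho andbT Hs2; lia.
  have [ps'' Eps /andP[Hall Hcl]] := IH (s :: occ) (introT andP (conj Hso Hu)) Ho' Hps Hsz' Hp.
  exists (a :: ps''); first by rewrite Eps.
  rewrite /= Ha2 Hall /= andbT. apply/andP; split; first lia.
  have Ha' : 2 <= a <= n by lia.
  have Ha1 : 1 <= a <= n by lia.
  rewrite spotE cands0.
  have e2 : (n.-1 - (n.+1 - a)).+1 = a.-1 by lia.
  rewrite e2 (E2 Ha1) fe_map //; last first.
    apply/allP => y /mapP[i _ ->]; lia.
  move: E; rewrite (cands_split Ha') fe_cat.
  case E': first_empty => [t|].
  + by move=> [->].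
  + case: ifP => _ //. by rewrite /= /occupied (negbTE H1o) => [[]] Es; lia.
- have Hall := fe_none E.
  case: (ltnP a n) => Han.
  + exfalso. have : 1 \in cands n n.-2 a by apply: mem_cands_gen; lia.
    by move/Hall; rewrite (negbTE H1o).
  + have an : a = n by lia.
    have Hsub : {subset iota 2 n.-1 <= occ}.
      move=> j; rewrite mem_iota => Hj; apply: Hall; apply: cov2; lia.
    have Hle : size (iota 2 n.-1) <= size occ :=
      @uniq_leq_size _ (iota 2 n.-1) occ (iota_uniq 2 n.-1) Hsub.
    rewrite size_iota in Hle.
    case: ps Hsz Hp {IH Hps} => [|p ps] /= Hsz Hp; last by exfalso; lia.
    by exists [::]; rewrite ?an.
Qed.

Theorem theorem2p3 (n : nat) (hn : 2 <= n) :
  (forall alpha, PF n.-1 alpha ->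
     PF_naples n n.-1 (Psi n alpha) && ~~ PF_naples n n.-2 (Psi n alpha)) /\
  {in PF n.-1 &, injective (Psi n)} /\
  (forall beta, PF_naples n n.-1 beta -> ~~ PF_naples n n.-2 beta ->
     exists2 alpha, PF n.-1 alpha & Psi n alpha = beta).
Proof.
have PFE : forall alpha, PF n.-1 alpha ->
   [/\ size alpha = n.-1, all (inr n.-1) alpha & naples_park n.-1 0 [::] alpha != None].
  move=> alpha; rewrite /PF /PF_naples /PP => /andP[/andP[/eqP H1 H2] H3].
  by split.
split; [|split].
- move=> alpha /PFE [Hsz Hal Hp].
  have HPP : PP n (Psi n alpha).
    rewrite /PP /Psi size_rcons size_map Hsz all_rcons all_map.
    apply/andP; split; first lia.
    apply/andP; split; first lia.
    apply/allP => x Hx /=. move/allP: Hal => /(_ x Hx); rewrite /inr; lia.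
  rewrite /PF_naples HPP /=. apply/andP; split.
  + apply/eqP; apply: (@park_ok n n.-1 1) => //.
    * move=> a Ha j Hj; exact: cov1.
    * move=> j; lia.
    * by move: HPP; rewrite /PP => /andP[_].
    * by move: HPP; rewrite /PP => /andP[/eqP -> _].
  + rewrite negbK. apply/eqP.
    case Hp': (naples_park n.-1 0 [::] alpha) => [fin|]; last by rewrite Hp' in Hp.
    have [Ufin Afin Sfin] := park_inv Hp' is_true_true is_true_true Hal.
    rewrite /Psi -cats1 park_cat.
    have Hal' : all (fun y => y <= n) ([::] : seq nat) by [].
    have := fwd hn Hal Hal' Hp'. rewrite /= => ->.
    rewrite /= spotE fe_all //.
    move=> j; rewrite cands_n // => /mapP[i]; rewrite mem_iota => Hi ->.
    have Hsub : {subset fin <= iota 1 n.-1}.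
      move=> y Hy; rewrite mem_iota; move/allP: Afin => /(_ y Hy); rewrite /inr; lia.
    have Hsz' : size (iota 1 n.-1) <= size fin by rewrite size_iota Sfin /= Hsz.
    have Heq := (uniq_min_size Ufin Hsub Hsz').2.
    have -> : n - i = n.+1 - (n.+1 - (n - i)) by lia.
    apply: map_f. rewrite Heq mem_iota. lia.
- move=> a1 a2; rewrite !unfold_in => /PFE [_ H1 _] /PFE [_ H2 _].
  rewrite /Psi => /rcons_inj [E].
  have L : forall s, all (inr n.-1) s -> all (fun y => y <= n.+1) s.
    move=> s /allP Hs; apply/allP => y /Hs; rewrite /inr; lia.
  by rewrite -(reflK (L _ H1)) E reflK // L.
- move=> beta; rewrite /PF_naples => /andP[Hpp _].
  rewrite Hpp /= negbK => /eqP Hnone.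
  move: Hpp; rewrite /PP => /andP[/eqP Hsz Hb].
  have [ps' Eps /andP[Hall Hcl]] := @bwd n beta [::] hn is_true_true is_true_true Hb Hsz Hnone.
  exists [seq n.+1 - y | y <- ps'].
  + rewrite /PF /PF_naples /PP size_map Hcl andbT.
    rewrite Eps size_rcons in Hsz.
    apply/andP; split; first lia.
    rewrite all_map; apply/allP => y Hy /=. move/allP: Hall => /(_ y Hy); rewrite /inr; lia.
  + rewrite /Psi reflK ?Eps //. apply/allP => y Hy. move/allP: Hall => /(_ y Hy); lia.
Qed.
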